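(* For every positive integer $n$, the number $v(n)$ is odd.
   Context: Let $A$ be a finite set of $n$ candidates. A voter is a linear order (ranking) of $A$, written as a permutation $x_1x_2\cdots x_n$ of $A$, meaning the voter prefers $x_i$ to $x_j$ iff $i<j$. A set of voters is a nonempty finite multiset of voters (several voters may have the same ranking). A strong preference pattern on $A$ is a tournament $T$ on vertex set $A$ (for each pair of distinct $a,b\in A$ exactly one of the arcs $(a,b)$, $(b,a)$ is present). A set of voters $U$ generates $T$ if for every pair of distinct candidates $a,b$, the arc $(a,b)$ is in $T$ if and only if strictly more voters of $U$ rank $a$ above $b$ than rank $b$ above $a$ (so in particular no pair is tied). For a tournament $T$, $v(T)$ denotes the minimum size of a set of voters generating $T$, and $v(n)=\max\{v(T): T \text{ a tournament on } n \text{ vertices}\}$. *)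

(* Defs.v *)
From mathcomp Require Import all_boot all_fingroup.
Set Implicit Arguments. Unset Strict Implicit. Unset Printing Implicit Defensive.

(* A voter (linear order on 'I_n) is encoded by its rank
   permutation r : {perm 'I_n}; r a is the position of candidate a
   (position 0 = most preferred). *)
Definition voter (n : nat) := {perm 'I_n}.

Definition prefers (n : nat) (a b : 'I_n) (r : voter n) : bool := r a < r b.

Definition tournament (n : nat) (T : rel 'I_n) : Prop :=
  (forall a, ~~ T a a) /\ (forall a b, a != b -> T a b = ~~ T b a).

(* A set of voters is a nonempty finite multiset, i.e. a nonempty seq. *)
Definition generates (n : nat) (U : seq (voter n)) (T : rel 'I_n) : Prop :=
  0 < size U /\
  forall a b : 'I_n, a != b ->
    T a b = (count (prefers b a) U < count (prefers a b) U).

Definition is_vT (n : nat) (T : rel 'I_n) (k : nat) : Prop :=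
  (exists U : seq (voter n), generates U T /\ size U = k) /\
  (forall U : seq (voter n), generates U T -> k <= size U).

Definition is_vn (n : nat) (m : nat) : Prop :=
  (exists T : rel 'I_n, tournament T /\ is_vT T m) /\
  (forall (T : rel 'I_n) (k : nat), tournament T -> is_vT T k -> k <= m).

(* Main.v *)
Require Import Defs.
From mathcomp Require Import all_boot all_fingroup.
From mathcomp Require Import zify.
From Stdlib Require Import Classical.

Section Big.
Variable m : nat.
Local Notation n := m.+2.
Definition o0 : 'I_n := ord0.
Definition o1 : 'I_n := Ordinal (isT : 1 < m.+2).
Definition rv : {perm 'I_n} := perm (@rev_ord_inj n).
Definition sgm (a b : 'I_n) : {perm 'I_n} :=
  tperm a o0 * tperm (tperm a o0 b) o1.
Definition tau (a b : 'I_n) : {perm 'I_n} :=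
  sgm a b * rv * tperm (rev_ord o0) (rev_ord o1).
Definition gpos (k : nat) := if k == 0 then n - 2 else if k == 1 then n - 1 else n - k.+1.

Lemma rvE z : rv z = rev_ord z.
Proof. by rewrite /rv permE. Qed.

Lemma tauE a b x : val (tau a b x) = gpos (val (sgm a b x)).
Proof.
rewrite /tau; move: (sgm a b) => s; rewrite !permM rvE /gpos.
move: (s x) => i.
case: (tpermP (rev_ord o0) (rev_ord o1) (rev_ord i)).
- move/rev_ord_inj => ->; by rewrite /= .
- move/rev_ord_inj => ->; by rewrite /=.
- move=> h1 h2. have H0 : i != o0 by apply/eqP => E; apply: h1; rewrite E.
  have H1 : i != o1 by apply/eqP => E; apply: h2; rewrite E.
  move: H0 H1; rewrite -!val_eqE /= => /negPf -> /negPf -> //.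
Qed.

Lemma sigA a b : a != b -> sgm a b a = o0.
Proof.
move=> ab; rewrite /sgm permM tpermL.
have c0 : tperm a o0 b != tperm a o0 a by rewrite (inj_eq perm_inj) eq_sym.
rewrite tpermL in c0.
by rewrite (@tpermD _ (tperm a o0 b) o1 o0).
Qed.

Lemma sigB a b : sgm a b b = o1.
Proof. by rewrite /sgm permM tpermL. Qed.

Lemma pair_cnt a b x y : a != b -> x != y ->
 (prefers x y (sgm a b) + prefers x y (tau a b)) + ((x,y) == (b,a)) =
 1 + ((x,y) == (a,b)).
Proof.
move=> ab xy.
rewrite /prefers !tauE !xpair_eqE.
rewrite -(inj_eq (@perm_inj _ (sgm a b)) x a) -(inj_eq (@perm_inj _ (sgm a b)) x b).
rewrite -(inj_eq (@perm_inj _ (sgm a b)) y a) -(inj_eq (@perm_inj _ (sgm a b)) y b).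
rewrite sigA // sigB -!val_eqE /=.
have : nat_of_ord (sgm a b x) != nat_of_ord (sgm a b y).
  by rewrite val_eqE (inj_eq perm_inj).
have := ltn_ord (sgm a b x); have := ltn_ord (sgm a b y).
move: (val (sgm a b x)) (val (sgm a b y)) => i j.
rewrite /gpos => hj hi hij.
repeat (case: ifP => ?); lia.
Qed.

Lemma tie_cnt x y : x != y -> prefers x y (1%g : {perm 'I_n}) + prefers x y rv = 1.
Proof.
move=> xy; rewrite /prefers !perm1 !rvE /=.
have : nat_of_ord x != nat_of_ord y by rewrite val_eqE.
have := ltn_ord x; have := ltn_ord y; lia.
Qed.
End Big.

Definition pairv {m} (ab : 'I_m.+2 * 'I_m.+2) : seq (voter m.+2) :=
  if ab.1 == ab.2 then [:: 1%g; rv m] else [:: sgm _ ab.1 ab.2; tau _ ab.1 ab.2].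

Lemma pairv_cnt m (x y : 'I_m.+2) ab : x != y ->
  count (prefers x y) (pairv (m:=m) ab) + (ab == (y,x)) = 1 + (ab == (x,y)).
Proof.
case: ab => a b xy; rewrite /pairv /=.
case: eqP => [<-|/eqP hab].
  have E1 : ((a, a) == (y, x)) = false.
    by apply/negbTE; apply: contra xy; rewrite xpair_eqE => /andP[/eqP <- /eqP <-].
  have E2 : ((a, a) == (x, y)) = false.
    by apply/negbTE; apply: contra xy; rewrite xpair_eqE => /andP[/eqP <- /eqP <-].
  rewrite E1 E2 addn0 -(@tie_cnt m _ _ xy); by rewrite /= !addn0.
rewrite /= addn0. have := @pair_cnt m _ _ _ _ hab xy.
have E : ((x,y) == (b,a)) = ((a,b) == (y,x)) by rewrite !xpair_eqE andbC [b == x]eq_sym [a == y]eq_sym.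
rewrite E [(x,y) == (a,b)]eq_sym; lia.
Qed.

Lemma flat_cnt m (x y : 'I_m.+2) s : x != y ->
  count (prefers x y) (flatten (map (@pairv m) s)) + count (pred1 (y,x)) s
  = size s + count (pred1 (x,y)) s.
Proof.
move=> xy; elim: s => [|ab s IH] //=.
rewrite count_cat.
have := @pairv_cnt m _ _ ab xy.
rewrite [ab == (y,x)]eq_sym [ab == (x,y)]eq_sym.
move=> H; move: H IH. move: (_ == ab) (_ == ab) (count _ (pairv ab)) (count (prefers x y) (flatten _)) (count (pred1 (y,x)) s) (count (pred1 (x,y)) s) (size s) => b1 b2 c d e f gpos. lia.
Qed.

Definition arcs {m} (T : rel 'I_m.+2) : seq ('I_m.+2 * 'I_m.+2) :=
  [seq ab <- enum {: 'I_m.+2 * 'I_m.+2} | T ab.1 ab.2].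

Definition mcg {m} (T : rel 'I_m.+2) : seq (voter m.+2) :=
  [:: 1%g; rv m] ++ flatten (map (@pairv m) (arcs T)).

Lemma size_flat m (s : seq ('I_m.+2 * 'I_m.+2)) :
  size (flatten (map (@pairv m) s)) = 2 * size s.
Proof.
elim: s => [|ab s IH] //=; rewrite size_cat IH /pairv; case: ifP => _ /=; lia.
Qed.

Lemma arcs_mem m (T : rel 'I_m.+2) x y : count (pred1 (x,y)) (arcs T) = T x y.
Proof.
rewrite count_uniq_mem; last by rewrite filter_uniq // enum_uniq.
by rewrite mem_filter mem_enum andbT.
Qed.

Lemma mcg_gen m (T : rel 'I_m.+2) : tournament T -> generates (mcg T) T.
Proof.
case=> Tirr Tas; split => // x y xy.
have yx : y != x by rewrite eq_sym.
have H1 := @flat_cnt m x y (arcs T) xy.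
have H2 := @flat_cnt m y x (arcs T) yx.
have t1 := @tie_cnt m x y xy.
have t2 := @tie_cnt m y x yx.
rewrite !arcs_mem in H1 H2.
have E := Tas x y xy.
rewrite /mcg !count_cat /= !addn0.
move: H1 H2 t1 t2 E.
move: (count (prefers x y) _) (count (prefers y x) _) (prefers x y _) (prefers y x _) (prefers x y (rv m)) (prefers y x (rv m)) (T x y) (T y x) (size (arcs T)) => a b c d e f gpos h k.
case: gpos; case: h => //=; lia.
Qed.

Lemma mcg_size m (T : rel 'I_m.+2) : size (mcg T) <= 2 + 2 * #|{: 'I_m.+2 * 'I_m.+2}|.
Proof.
rewrite /mcg size_cat size_flat /= /arcs size_filter cardE.
by rewrite leq_add2l leq_mul2l count_size orbT.
Qed.
Set Implicit Arguments.

Lemma mcgarvey n : exists B, forall T : rel 'I_n, tournament T ->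
  exists U, generates U T /\ size U <= B.
Proof.
case: n => [|[|m]].
- exists 1 => T _; exists [:: 1%g]; split => //; split => // [[]] //.
- exists 1 => T _; exists [:: 1%g]; split => //; split => //.
  by move=> [[|a] ha] [[|b] hb].
- exists (2 + 2 * #|{: 'I_m.+2 * 'I_m.+2}|) => T tT; exists (mcg T); split.
  + exact: mcg_gen.
  + exact: mcg_size.
Qed.

Lemma cnt_sum n (x y : 'I_n) (s : seq (voter n)) : x != y ->
  count (prefers x y) s + count (prefers y x) s = size s.
Proof.
move=> xy; elim: s => [|r s IH] //=.
have : nat_of_ord (r x) != r y by rewrite val_eqE (inj_eq perm_inj).
rewrite /prefers; move: IH; move: (count _ s) (count _ s) (nat_of_ord (r x)) (nat_of_ord (r y)) => a b c d.
lia.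
Qed.

Lemma drop_even n (U : seq (voter n)) T : tournament T -> generates U T ->
  ~~ odd (size U) -> generates (behead U) T.
Proof.
move=> [_ Tas].
case: U => [[]//|u U] [_ gU] ev.
have e := odd_double_half (size (u :: U)).
rewrite (negbTE ev) add0n -mul2n in e.
split.
  move: e => /=; move: (size U) ((size U).+1./2) => a b; lia.
move=> x y xy /=.
have yx : y != x by rewrite eq_sym.
have h1 := gU x y xy; have h2 := gU y x yx; have h3 := Tas x y xy.
have := @cnt_sum n x y U xy.
have pe : prefers y x u = ~~ prefers x y u.
  have : nat_of_ord (u x) != u y by rewrite val_eqE (inj_eq perm_inj).
  rewrite /prefers; move: (nat_of_ord (u x)) (nat_of_ord (u y)) => a b.
  by case: ltngtP.
rewrite /= pe in h1 h2.
move: h1 h2 h3 e => /=.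
move: (T x y) (T y x) (count (prefers x y) U) (count (prefers y x) U) (prefers x y u) (size U) => tx ty a b c d.
move: (uphalf d) => k.
case: tx; case: ty; case: c => //= h1 h2 h3 e1 e2; apply/idP/idP => H; lia.
Qed.

Lemma vT_odd n (T : rel 'I_n) k : tournament T -> is_vT T k -> odd k.
Proof.
move=> tT.
case=> [[U [gU sU]] mn].
case ok: (odd k) => //.
have ev : ~~ odd (size U) by rewrite sU ok.
have := mn _ (drop_even tT gU ev).
move: gU => [p _]; rewrite size_behead; lia.
Qed.

Lemma exists_vT n (T : rel 'I_n) U : generates U T -> exists k, is_vT T k.
Proof.
move: {2}(size U) (leqnn (size U)) => N.
elim: N U => [|N IH] U sU gU.
  by move: gU => [p _]; lia.
case: (classic (exists U', generates U' T /\ size U' < size U)).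
  move=> [U' [gU' s']]; apply: (IH U') => //; lia.
move=> nE; exists (size U); split; first by exists U.
move=> U' gU'; case: (leqP (size U) (size U')) => // h.
by exfalso; apply: nE; exists U'.
Qed.

Lemma bounded_max (P : nat -> Prop) B : (exists k, P k) ->
  (forall k, P k -> k <= B) -> exists m, P m /\ forall k, P k -> k <= m.
Proof.
elim: B => [|B IH] [k Pk] bnd.
  exists 0; split; last by move=> j /bnd; lia.
  by have := bnd _ Pk; rewrite leqn0 => /eqP <-.
case: (classic (P B.+1)) => [PB|nPB].
  by exists B.+1; split.
apply: IH; first by exists k.
move=> j Pj; have := bnd _ Pj; rewrite leq_eqVlt => /orP[/eqP E|] //.
by exfalso; apply: nPB; rewrite -E.
Qed.

Theorem lemma1 (n : nat) : 0 < n -> exists m : nat, is_vn n m /\ odd m.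
Proof.
move=> _.
have [B HB] := mcgarvey n.
pose P k := exists T : rel 'I_n, tournament T /\ is_vT T k.
have t0 : tournament (fun a b : 'I_n => a < b).
  split; first by move=> a; rewrite ltnn.
  move=> a b ab; have : nat_of_ord a != b by rewrite val_eqE.
  by case: ltngtP.
have [m [Pm mx]] : exists m, P m /\ forall k, P k -> k <= m.
  apply: (@bounded_max P B).
    have [U [gU _]] := HB _ t0.
    have [k vk] := exists_vT gU.
    by exists k, (fun a b : 'I_n => a < b).
  move=> k [T [tT [_ mn]]].
  have [U [gU sU]] := HB _ tT.
  exact: leq_trans (mn _ gU) sU.
exists m; split.
  split; first exact: Pm.
  by move=> T k tT vk; apply: mx; exists T.
by case: Pm => T [tT /(vT_odd tT)].
Qed.
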